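(* Let $\theta_p:C_2^{\rm SLB}(\mathbb Z_p)\to\mathbb Z_p$ be the $2$-cocycle given on generators by \[ \theta_p((a,b),(a,c))=(a-b)\,\frac{(a-b+2c)^p+(a+b)^p-2(a+c)^p}{p}\pmod p \] (computed with integer lifts, numerator in $\mathbb Z$). Let $D$ be a diagram of a Dehn $p$-colorable knot, $C$ a Dehn $p$-coloring of $D$, $s\in\mathbb Z_p^\times$, $t\in\mathbb Z_p$, and $C'=sC+t$ (the map $x\mapsto sC(x)+t$, which is again a Dehn $p$-coloring of $D$). Then \[ \theta_p(W(D,C'))=s^2\,\theta_p(W(D,C)). \]
   Context: Let $p$ be an odd prime, $X=\mathbb Z_p$, $[a,b,c]=a-b+c$, $\rho((a,b))=(b,a)$, $(a,b)\,\underline{\star}\,(a,c)=(c,[a,b,c])$, $(a,b)\,\overline{\star}\,(a,c)=(c,[a,c,b])$. For $n\ge1$ let $C_n^{\rm lb}(X)$ be the free abelian group on tuples $((a,b_1),\dots,(a,b_n))$, $a,b_i\in X$; $D_n^{\rm lb}(X)$ the subgroup generated by tuples with $b_i=b_{i+1}$ for some $i$; $D_n^{\rm lb}(X,\rho)$ the subgroup generated by all $((a,b_1),\dots,(a,b_n))+((a,b_1)\underline\star(a,b_i),\dots,(a,b_{i-1})\underline\star(a,b_i),\rho((a,b_i)),(a,b_{i+1})\overline\star(a,b_i),\dots,(a,b_n)\overline\star(a,b_i))$; and $C_n^{\rm SLB}(X)=C_n^{\rm lb}(X)/(D_n^{\rm lb}(X)+D_n^{\rm lb}(X,\rho))$.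 (The formula for $\theta_p$ is well defined on this quotient.) Dehn $p$-colorings: for a knot diagram $D$ with region set $\mathcal R(D)$, at each crossing label the four regions $x_1,x_2,x_3,x_4$ so that $x_2$ is adjacent to $x_1$ across an under-arc, $x_3$ adjacent to $x_1$ across the over-arc, $x_4$ opposite $x_1$; a Dehn $p$-coloring is $C:\mathcal R(D)\to\mathbb Z_p$ with $C(x_1)+C(x_3)=C(x_2)+C(x_4)$ at every crossing. At each crossing $\chi$ choose a specified region $x_1$, put $a=C(x_1),b=C(x_2),c=C(x_3)$, $w_\chi=\varepsilon((a,b),(a,c))\in C_2^{\rm SLB}(X)$ with $\varepsilon=+1$ if $(n_o,n_u)$ is a positively oriented basis of $\mathbb R^2$ and $-1$ otherwise ($n_u$ the normal vector from $x_1$ to $x_2$, $n_o$ from $x_1$ to $x_3$); $W(D,C)=\sum_\chi w_\chi$, which is independent of the choices of specified regions. *)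

(* Defs.v *)
From mathcomp Require Import all_boot all_algebra.
Set Implicit Arguments. Unset Strict Implicit. Unset Printing Implicit Defensive.
Import GRing.Theory.
Local Open Scope ring_scope.

(* Combinatorial model of a knot diagram with n crossings (crossings 'I_n).  *)
(* A dart (c,k) is the k-th ray (half-edge) at crossing c, rays numbered     *)
(* 0,1,2,3 counterclockwise.  Convention: rays 0 and 2 belong to the         *)
(* under-strand, rays 1 and 3 to the over-strand.                            *)
(* [edge] is the fixed-point-free involution gluing the rays into edges.     *)
(* The dart (c,k) also names the corner (angular sector) of crossing c       *)
(* between rays k and k+1 (counterclockwise).  Walking along the boundary of *)
(* a region, the corner following (c,k) is [edge (rotd (c,k))]; regions are  *)
(* the orbits of [face_perm].                                                *)

Definition dart (n : nat) := ('I_n * 'I_4)%type.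

Definition rotd n (d : dart n) : dart n := (d.1, ordS d.2).
Definition oppd n (d : dart n) : dart n := rotd (rotd d).

Record knot_diagram (n : nat) := KnotDiagram {
  edge : dart n -> dart n;
  edge_invol : forall d, edge (edge d) = d;
  edge_nofix : forall d, edge d != d;
  (* one component: following the strand straight through the crossings
     (arrive by d, leave by the opposite ray, follow the edge) every dart is
     reached either as an arriving dart or as a leaving dart *)
  one_component : forall d d' : dart n,
    exists k, (iter k (fun x => edge (oppd x)) d == d')
              || (iter k (fun x => edge (oppd x)) d == oppd d');
  (* planarity (cellular embedding in the sphere): V - E + F = 2,
     with V = n, E = 2n, F = number of regions *)
  planar : fcard (fun d => edge (rotd d)) (predT : {pred dart n}) = (n + 2)%N
}.

Definition face_perm n (D : knot_diagram n) (d : dart n) : dart n :=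
  edge D (rotd d).

Definition corner n (c : 'I_n) (k : nat) : dart n := iter k (@rotd n) (c, ord0).

(* A Dehn p-coloring: a map from regions to Z_p, encoded as a map on corners
   that is constant along each region; at each crossing the two regions on one
   side of the over-arc (corners 0,1) and those on the other side (corners
   3,2) satisfy C(x1)+C(x3) = C(x2)+C(x4) with x1 = corner 0, x2 = corner 3
   (across the under-arc), x3 = corner 1 (across the over-arc),
   x4 = corner 2 (opposite). *)
Definition dehn_coloring (p n : nat) (D : knot_diagram n) (C : dart n -> 'F_p) :=
  (forall d, C (face_perm D d) = C d) /\
  (forall c : 'I_n,
     C (corner c 0) + C (corner c 1) = C (corner c 3) + C (corner c 2)).

(* The Fox coloring induced on edges: each ray (c,k) gets the sum of the two
   regions on both sides of it, i.e. corners (c,k-1) and (c,k). *)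
Definition fox_of n p (C : dart n -> 'F_p) (d : dart n) : 'F_p :=
  C d + C (rotd (rotd (rotd d))).

Definition dehn_colorable (p n : nat) (D : knot_diagram n) :=
  exists C : dart n -> 'F_p, dehn_coloring D C /\
    exists d1 d2, fox_of C d1 != fox_of C d2.

(* Chains: elements of the free abelian group C_2^lb(Z_p) are represented as *)
(* formal integer combinations of generators ((a,b),(a,c)).                  *)

Definition gen2 (p : nat) := (('F_p * 'F_p) * ('F_p * 'F_p))%type.
Definition chain2 (p : nat) := seq (int * gen2 p).

Definition theta_gen (p : nat) (g : gen2 p) : 'F_p :=
  let a := g.1.1 in let b := g.1.2 in let c := g.2.2 in
  let A : int := (nat_of_ord a)%:Z in
  let B : int := (nat_of_ord b)%:Z in
  let Cc : int := (nat_of_ord c)%:Z in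
  let N : int := (A - B + 2 * Cc) ^+ p + (A + B) ^+ p - 2 * (A + Cc) ^+ p in
  (a - b) * ((N %/ (p%:Z))%Z)%:~R.

Definition theta_chain (p : nat) (w : chain2 p) : 'F_p :=
  \sum_(x <- w) (theta_gen x.2 *~ x.1).

(* Representative of W(D,C): at each crossing c the specified region is
   x1 = corner 0; then a = C(x1), b = C(x2) = C(corner 3),
   c = C(x3) = C(corner 1), and the sign is +1 (with rays numbered
   counterclockwise, n_u points from corner 0 to corner 3 and n_o from
   corner 0 to corner 1, and (n_o,n_u) is positively oriented). *)
Definition W_chain (p n : nat) (D : knot_diagram n) (C : dart n -> 'F_p)
  : chain2 p :=
  [seq (1%:Z, ((C (corner c 0), C (corner c 3)), (C (corner c 0), C (corner c 1))))
  | c <- enum 'I_n].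

(* Main.v *)
Require Import Defs.
From mathcomp Require Import all_boot all_algebra ring.
Import GRing.Theory.
Set Implicit Arguments. Unset Strict Implicit. Unset Printing Implicit Defensive.
Local Open Scope ring_scope.

Definition Qr (p : nat) (R : comNzRingType) (x y : R) : R :=
  \sum_(0 <= i < p.+1) x ^+ (p - i) * y ^+ i *+ ('C(p, i) %/ p).

Lemma exprDp (p : nat) (R : comNzRingType) (x y : R) : prime p ->
  (x + y) ^+ p = x ^+ p + y ^+ p + Qr p x y *+ p.
Proof.
move=> pP; have p1 := prime_gt1 pP.
rewrite exprDn /Qr -sumrMnl -(big_mkord xpredT (fun i => x ^+ (p - i) * y ^+ i *+ 'C(p, i))).
have -> : \sum_(0 <= i < p.+1) x ^+ (p - i) * y ^+ i *+ 'C(p, i) =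
  \sum_(0 <= i < p.+1) (x ^+ (p - i) * y ^+ i *+ ('C(p, i) %% p)
     + (x ^+ (p - i) * y ^+ i *+ ('C(p, i) %/ p)) *+ p).
  apply: eq_bigr => i _; rewrite -mulrnA -mulrnDr; congr (_ *+ _).
  by rewrite addnC -divn_eq.
rewrite big_split /= sumrMnl; congr (_ + _).
rewrite big_nat_recr //= big_ltn ?prime_gt0 //.
rewrite bin0 binn !modn_small // big1_seq ?addr0 ?mulr1n.
  by rewrite subn0 subnn !expr0 mulr1 mul1r.
move=> i /andP [_]; rewrite mem_iota => /andP [i1 ip].
have /eqP -> : ('C(p, i) %% p == 0)%N.
  change (p %| 'C(p, i))%N; rewrite prime_dvd_bin //; apply/andP; split => //.
  by rewrite subnKC // ltnW in ip.
by rewrite mulr0n.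
Qed.

Lemma exprD_nil (R : comNzRingType) (x y : R) n : y * y = 0 ->
  (x + y) ^+ n = x ^+ n + x ^+ n.-1 * y *+ n.
Proof.
move=> yy; case: n => [|n]; first by rewrite !expr0 mulr0n addr0.
elim: n => [|n IH]; first by rewrite /= expr0 mul1r mulr1n.
rewrite exprS IH /=.
rewrite (exprS x n.+1) (exprS x n) [_ *+ n.+2]mulrS.
move: (x ^+ n) (n.+1) => X k.
transitivity (x * (x * X) + (x * X * y + x * X * y *+ k) + X * (y * y) *+ k); first ring.
by rewrite yy mulr0 mul0rn addr0.
Qed.



Lemma rmorph_Qr (p : nat) (R S : comNzRingType) (f : {rmorphism R -> S}) (x y : R) :
  f (Qr p x y) = Qr p (f x) (f y).
Proof.
rewrite /Qr rmorph_sum; apply: eq_bigr => i _.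
by rewrite rmorphMn rmorphM !rmorphXn.
Qed.

Lemma intr_Qr (p : nat) (R : comNzRingType) (x y : int) :
  ((Qr p x y)%:~R : R) = Qr p x%:~R y%:~R.
Proof.
rewrite /Qr; rewrite (big_morph (fun z : int => (z%:~R : R)) (@intrD _) (mulr0z 1)).
apply: eq_bigr => i _.
by rewrite raddfMn /= intrM !rmorphXn.
Qed.

Lemma intr_Zp0 (m : nat) (x : int) : (1 < m)%N ->
  ((x%:~R : 'Z_m) == 0) = (m %| x)%Z.
Proof.
move=> m1.
have H (k : nat) : ((k%:R : 'Z_m) == 0) = (m %| k)%N.
  by rewrite -(inj_eq val_inj) /= val_Zp_nat.
case: x => k; first by rewrite /= H.
by rewrite NegzE mulrNz oppr_eq0 /= H.
Qed.

Section P.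
Variable p : nat.
Hypothesis pP : prime p.
Local Notation pi x := (x%:~R : 'F_p).
Local Notation io x := (x%:~R : 'Z_(p * p)).

Lemma p1 : (1 < p)%N. Proof. exact: prime_gt1. Qed.
Lemma pp1 : (1 < p * p)%N. Proof. by rewrite (ltn_trans p1) // -{1}(muln1 p) ltn_pmul2l ?p1 // ltnW ?p1. Qed.

Lemma natrFp (a : 'F_p) : (nat_of_ord a)%:R = a.
Proof.
apply: val_inj; rewrite /= val_Fp_nat // modn_small //.
by case: a => a /=; rewrite (Fp_cast pP).
Qed.

Lemma liftK (a : 'F_p) : pi (nat_of_ord a)%:Z = a.
Proof. exact: natrFp. Qed.

Lemma Fp_frob (x : 'F_p) : x ^+ p = x.
Proof.
rewrite -{1}(natrFp x) -natrX -Fp_nat_mod //.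
by rewrite (fermat_little _ pP) Fp_nat_mod // natrFp.
Qed.

Lemma pi_dvd (x : int) : (pi x == 0) = (p %| x)%Z.
Proof. by rewrite (dvdz_pcharf (pchar_Fp pP)). Qed.

Lemma pi_lift (x y : int) : pi x = pi y -> exists k, x = y + k * p%:Z.
Proof.
move/eqP; rewrite -subr_eq0 -rmorphB pi_dvd => /dvdzP [k Hk].
by exists k; rewrite -Hk addrC subrK.
Qed.

Lemma pi_p : pi (p%:Z) = 0.
Proof. exact: (pchar_Fp_0 pP). Qed.

Lemma io_pp (k : int) : io (k * (p%:Z * p%:Z)) = 0.
Proof. by apply/eqP; rewrite intr_Zp0 ?pp1 // -PoszM dvdz_mull. Qed.

Lemma K4 (N R : int) : io N = p%:R * io R -> pi (N %/ p%:Z)%Z = pi R.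
Proof.
move/eqP; rewrite -subr_eq0.
have -> : io N - p%:R * io R = io (N - p%:Z * R) by rewrite rmorphB rmorphM.
rewrite intr_Zp0 ?pp1 // => /dvdzP [k Hk].
have -> : N = (R + k * p%:Z) * p%:Z.
  by rewrite PoszM in Hk; rewrite -(subrK (p%:Z * R) N) Hk; ring.
rewrite mulzK; last by rewrite eqz_nat -lt0n prime_gt0.
by rewrite intrD intrM pi_p mulr0 addr0.
Qed.

Lemma pow_shift (x m : int) : io (x + m * p%:Z) ^+ p = io x ^+ p.
Proof.
have yy : io (m * p%:Z) * io (m * p%:Z) = 0.
  by rewrite -intrM -(io_pp (m * m)); congr (io _); ring.
rewrite intrD (exprD_nil _ _ yy) -mulr_natr -mulrA.
have -> : io (m * p%:Z) * p%:R = 0.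
  by rewrite -(io_pp m) -[p%:R]/(io p%:Z) -intrM; congr (io _); ring.
by rewrite mulr0 addr0.
Qed.
Lemma intr2 (R : pzRingType) : ((2:int)%:~R : R) = 2.
Proof. by []. Qed.

Lemma intrX (R : pzRingType) (m : int) n : ((m ^+ n)%:~R : R) = m%:~R ^+ n.
Proof. exact: rmorphXn. Qed.

Definition Nf (X Y Z : int) : int :=
  (X - Y + 2 * Z) ^+ p + (X + Y) ^+ p - 2 * (X + Z) ^+ p.

Lemma Ndvd X Y Z : (p%:Z %| Nf X Y Z)%Z.
Proof.
rewrite -pi_dvd /Nf !(intrD, intrN, intrM, intrX, intr2) !Fp_frob.
apply/eqP; ring.
Qed.

Lemma fin_alg (R : comNzRingType) (s u v w T nn : R) :
  u ^+ p + v ^+ p - 2 * w ^+ p = nn * p%:R ->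
  (s * u + T) ^+ p + (s * v + T) ^+ p - 2 * (s * w + T) ^+ p
  = p%:R * (s ^+ p * nn + Qr p (s * u) T + Qr p (s * v) T - 2 * Qr p (s * w) T).
Proof.
move=> h; rewrite !(exprDp _ _ pP) !exprMn.
transitivity (s ^+ p * (u ^+ p + v ^+ p - 2 * w ^+ p)
   + (Qr p (s * u) T + Qr p (s * v) T - 2 * Qr p (s * w) T) *+ p); first ring.
by rewrite h; ring.
Qed.

Definition Rint (S T X Y Z : int) (n : int) : int :=
  S ^+ p * n + Qr p (S * (X - Y + 2 * Z)) (2 * T) + Qr p (S * (X + Y)) (2 * T)
  - 2 * Qr p (S * (X + Z)) (2 * T).

Lemma core (A B Cc A' B' Cc' S T : int) :
  pi A' = pi S * pi A + pi T -> pi B' = pi S * pi B + pi T ->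
  pi Cc' = pi S * pi Cc + pi T ->
  pi (Nf A' B' Cc' %/ p%:Z)%Z = pi S * pi (Nf A B Cc %/ p%:Z)%Z
    + (Qr p (pi S * pi (A - B + 2 * Cc)) (2 * pi T)
       + Qr p (pi S * pi (A + B)) (2 * pi T)
       - 2 * Qr p (pi S * pi (A + Cc)) (2 * pi T)).
Proof.
move=> hA hB hC.
have [ka eA] : exists k, A' = S * A + T + k * p%:Z by apply: pi_lift; rewrite hA intrD intrM.
have [kb eB] : exists k, B' = S * B + T + k * p%:Z by apply: pi_lift; rewrite hB intrD intrM.
have [kc eC] : exists k, Cc' = S * Cc + T + k * p%:Z by apply: pi_lift; rewrite hC intrD intrM.
set n := (Nf A B Cc %/ p%:Z)%Z.
have hN : Nf A B Cc = n * p%:Z by rewrite divzK // Ndvd.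
have hN' : io (A - B + 2 * Cc) ^+ p + io (A + B) ^+ p - 2 * io (A + Cc) ^+ p = io n * p%:R.
  have := congr1 (fun z => io z) hN; rewrite /Nf /= => h.
  rewrite intrD intrD intrN intrM !intrX intrM in h.
  by rewrite -h.
rewrite (K4 (R := Rint S T A B Cc n)); last first.
  rewrite /Nf /Rint eA eB eC.
  have -> : S * A + T + ka * p%:Z - (S * B + T + kb * p%:Z) + 2 * (S * Cc + T + kc * p%:Z)
     = (S * (A - B + 2 * Cc) + 2 * T) + (ka - kb + 2 * kc) * p%:Z by ring.
  have -> : S * A + T + ka * p%:Z + (S * B + T + kb * p%:Z)
     = (S * (A + B) + 2 * T) + (ka + kb) * p%:Z by ring.
  have -> : S * A + T + ka * p%:Z + (S * Cc + T + kc * p%:Z)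
     = (S * (A + Cc) + 2 * T) + (ka + kc) * p%:Z by ring.
  rewrite intrD intrD intrN intrM !intrX !pow_shift intr2.
  rewrite !(intrD, intrN, intrM, intrX, intr_Qr, intr2).
  rewrite !(intrD, intrN, intrM, intrX, intr_Qr, intr2) in hN'.
  exact: fin_alg.
rewrite /Rint !(intrD, intrN, intrM, intrX, intr2) !intr_Qr !(intrD, intrN, intrM, intrX, intr2).
rewrite Fp_frob; ring.
Qed.
Definition phi (s t x : 'F_p) := Qr p (s * x) (2 * t).

Lemma theta_aff (a b c s t : 'F_p) :
  theta_gen ((s * a + t, s * b + t), (s * a + t, s * c + t))
  = s ^+ 2 * theta_gen ((a, b), (a, c))
    + s * ((a - b) * (phi s t (a - b + 2 * c) + phi s t (a + b) - 2 * phi s t (a + c))).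
Proof.
rewrite /theta_gen /= -!/(Nf _ _ _).
rewrite (@core (nat_of_ord a)%:Z (nat_of_ord b)%:Z (nat_of_ord c)%:Z (nat_of_ord (s * a + t))%:Z (nat_of_ord (s * b + t))%:Z (nat_of_ord (s * c + t))%:Z (nat_of_ord s)%:Z (nat_of_ord t)%:Z); try by rewrite !liftK.
rewrite /phi !(intrD, intrN, intrM, intr2) !liftK.
ring.
Qed.
Lemma rot4 n (d : dart n) : rotd (rotd (rotd (rotd d))) = d.
Proof. case: d => c [[|[|[|[|k]]]] Hk] //=; try (by rewrite /rotd /= ; congr pair; apply: val_inj). Qed.

Lemma two_neq0 : odd p -> (2 : 'F_p) != 0.
Proof.
move=> po; rewrite -(dvdn_pcharf (pchar_Fp pP)).
apply/negP => /dvdn_leq /= h; have := h isT; have := prime_gt1 pP.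
by case: p po pP {h} => [|[|[|k]]].
Qed.

Lemma per_cross n (C : dart n -> 'F_p) (f : 'F_p -> 'F_p) (c : 'I_n) :
  C (corner c 0) + C (corner c 1) = C (corner c 3) + C (corner c 2) ->
  \sum_(k < 4) (C (c, k) - C (rotd (rotd (rotd (c, k))))) * f (C (rotd (rotd (rotd (c, k)))) + C (c, k))
  = (C (corner c 0) - C (corner c 3)) * (f (C (corner c 0) - C (corner c 3) + 2 * C (corner c 1))
      + f (C (corner c 0) + C (corner c 3)) - 2 * f (C (corner c 0) + C (corner c 1))).
Proof.
move=> hc.
rewrite !big_ord_recl big_ord0 /corner /=.
rewrite /corner /= in hc.
have e1 : (c, lift ord0 ord0) = rotd (c, ord0) :> dart n by congr pair; apply: val_inj.
have e2 : (c, lift ord0 (lift ord0 ord0)) = rotd (rotd (c, ord0)) :> dart n by congr pair; apply: val_inj.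
have e3 : (c, lift ord0 (lift ord0 (lift ord0 ord0))) = rotd (rotd (rotd (c, ord0))) :> dart n
  by congr pair; apply: val_inj.
rewrite e1 e2 e3 !rot4.
move: hc; move: (C (c, ord0)) (C (rotd (c, ord0))) (C (rotd (rotd (c, ord0)))) (C (rotd (rotd (rotd (c, ord0))))) => x0 x1 x2 x3 hc.
have -> : x2 = x0 + x1 - x3 by rewrite hc; ring.
have -> : x1 + (x0 + x1 - x3) = x0 - x3 + 2 * x1 by ring.
have -> : x0 + x1 - x3 + x3 = x0 + x1 by ring.
rewrite (addrC x3 x0).
ring.
Qed.

Lemma tele (po : odd p) n (D : knot_diagram n) (C : dart n -> 'F_p)
  (HC : dehn_coloring D C) (f : 'F_p -> 'F_p) :
  \sum_(c <- enum 'I_n) (C (corner c 0) - C (corner c 3)) *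
     (f (C (corner c 0) - C (corner c 3) + 2 * C (corner c 1))
      + f (C (corner c 0) + C (corner c 3)) - 2 * f (C (corner c 0) + C (corner c 1))) = 0.
Proof.
case: HC => HF HX.
set h := fun d : dart n => (C d - C (rotd (rotd (rotd d)))) * f (C (rotd (rotd (rotd d))) + C d).
have H0 : \sum_(d : dart n) h d = 0.
  have Hinv : \sum_(d : dart n) h d = - \sum_(d : dart n) h d.
    rewrite -sumrN (reindex_inj (can_inj (@edge_invol _ D))) /=.
    apply: eq_bigr => d _.
    have e1 : C (edge D d) = C (rotd (rotd (rotd d))).
      by have := HF (rotd (rotd (rotd d))); rewrite /face_perm rot4.
    have e2 : C (rotd (rotd (rotd (edge D d)))) = C d.
      by have := HF (rotd (rotd (rotd (edge D d)))); rewrite /face_perm rot4 edge_invol.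
    rewrite /h e1 e2 (addrC (C d)); ring.
  have : 2 * \sum_(d : dart n) h d = 0 by rewrite mulr_natl mulr2n {2}Hinv addrN.
  by move/eqP; rewrite mulf_eq0 (negbTE (two_neq0 po)) /= => /eqP.
transitivity (\sum_(d : dart n) h d); last exact: H0.
have -> : \sum_(d : dart n) h d = \sum_(c : 'I_n) \sum_(k < 4) h (c, k).
  by rewrite pair_bigA; apply: eq_bigr => -[].
rewrite big_enum; apply: eq_big => [c|c _]; first by rewrite inE.
by rewrite /h per_cross // HX.
Qed.
End P.

Theorem proposition4p5 (p : nat) (p_prime : prime p) (p_odd : odd p)
  (n : nat) (D : knot_diagram n) (Dcol : dehn_colorable p D)
  (C : dart n -> 'F_p) (HC : dehn_coloring D C)
  (s t : 'F_p) (s_unit : s != 0) :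
  theta_chain (W_chain D (fun x => s * C x + t))
  = s ^+ 2 * theta_chain (W_chain D C).
Proof.
rewrite /theta_chain /W_chain !big_map.
under eq_bigr => c _ do rewrite mulr1z (theta_aff p_prime).
under [X in _ = _ * X]eq_bigr => c _ do rewrite mulr1z.
rewrite big_split -mulr_sumr -mulr_sumr -enumT (tele p_prime p_odd HC) /=.
by rewrite mulr0 addr0.
Qed.
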